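(* Let $f:\mathbb{R}^d\times\mathcal{X}\to\mathbb{R}$ be differentiable in $\theta$, with $\mathcal{X}$ a subset of a Euclidean space, $\sup_{x\in\mathcal{X}}\Vert x\Vert\le D<\infty$ and $\sup_{x\in\mathcal{X}}\Vert\nabla f(0,x)\Vert\le E<\infty$. Assume (A1): there are $K_1,K_2>0$ with $\Vert\nabla f(\theta,x)-\nabla f(\hat\theta,\hat x)\Vert\le K_1\Vert\theta-\hat\theta\Vert+K_2\Vert x-\hat x\Vert(\Vert\theta\Vert+\Vert\hat\theta\Vert+1)$ for all $\theta,\hat\theta\in\mathbb{R}^d$, $x,\hat x\in\mathcal{X}$; (A3): there are $m>0,K>0$ with $\langle\nabla f(\theta_1,x)-\nabla f(\theta_2,x),\theta_1-\theta_2\rangle\ge m\Vert\theta_1-\theta_2\Vert^2-K$ for all $\theta_1,\theta_2,x$. Let $X_n=(x_1,\dots,x_n)$, $\hat X_n=(\hat x_1,\dots,\hat x_n)\in\mathcal{X}^n$ differ in at most one index, $b\in\{1,\dots,n\}$, $(\Omega_k)$ i.i.d. uniformly random $b$-subsets of $\{1,\dots,n\}$, and $$\theta_k=\theta_{k-1}-\tfrac\eta b\textstyle\sum_{i\in\Omega_k}\nabla f(\theta_{k-1},x_i),\qquad\hat\theta_k=\hat\theta_{k-1}-\tfrac\eta b\sum_{i\in\Omega_k}\nabla f(\hat\theta_{k-1},\hat x_i),$$ with $\theta_0=\hat\theta_0=\theta\in\mathbb{R}^d$. Assume $\eta<\min\left\{\frac1m,\frac{m}{K_1^2+64D^2K_2^2}\right\}$.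 Let $\nu_k,\hat\nu_k$ be the laws of $\theta_k,\hat\theta_k$, let $r:=\frac{E+\sqrt{E^2+4mK}}{2m}$ and $$B:=4\Vert\theta\Vert^2+4r^2+4-\frac{2\eta}{m}K_1^2-\frac{112\eta}{m}D^2K_2^2+\frac{128\eta}{m}D^2K_2^2r^2+\frac{4K}{m}+2r^2.$$ Then for all $k$, $$\mathcal{W}_2^2(\nu_k,\hat\nu_k)\le\left(1-(1-\eta m)^k\right)\left(\frac{4D^2K_2^2\eta(8B+2)}{bnm}+\frac{4K_2D(1+K_1\eta)}{nm}(1+5B)+\frac{2K}{m}\right).$$
   Context: $\mathcal{W}_2$ is the 2-Wasserstein distance: $\mathcal{W}_2(\mu,\nu)^2=\inf\mathbb{E}\Vert X-Y\Vert^2$ over couplings of $X\sim\mu$, $Y\sim\nu$. *)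

(* Defs.v *)
From HB Require Import structures.
From mathcomp Require Import all_boot all_order all_algebra.
From mathcomp Require Import all_classical all_reals all_analysis.
Set Implicit Arguments. Unset Strict Implicit. Unset Printing Implicit Defensive.
Import Order.TTheory GRing.Theory Num.Theory.
Import numFieldNormedType.Exports.
Local Open Scope classical_set_scope.
Local Open Scope ring_scope.

Section Defs.
Variable R : realType.

Definition vdot (d : nat) (u v : 'rV[R]_d) : R := \sum_(i < d) u ord0 i * v ord0 i.
Definition vnorm (d : nat) (v : 'rV[R]_d) : R := Num.sqrt (vdot v v).

Definition bsubset (n b : nat) := {A : {set 'I_n} | #|A| == b}.

Definition sgd (d p n : nat) (grad : 'rV[R]_d -> 'rV[R]_p -> 'rV[R]_d)
  (xs : 'I_n -> 'rV[R]_p) (eta : R) (b : nat) (th : 'rV[R]_d)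
  (ws : seq {set 'I_n}) : 'rV[R]_d :=
  foldl (fun t (A : {set 'I_n}) => t - (eta / b%:R) *: \sum_(i in A) grad t (xs i)) th ws.

(* Law of theta_k, with (O_1,...,O_k) i.i.d. uniform over b-subsets:
   a finitely supported probability on R^d given by its mass function
   y |-> P(theta_k = y). *)
Definition sgd_law (d p n : nat) (grad : 'rV[R]_d -> 'rV[R]_p -> 'rV[R]_d)
  (xs : 'I_n -> 'rV[R]_p) (eta : R) (b : nat) (th : 'rV[R]_d) (k : nat)
  : 'rV[R]_d -> R :=
  fun y => \sum_(w : k.-tuple (bsubset n b))
     (#|{: bsubset n b}|%:R ^- k) *
     (sgd grad xs eta b th (map val (tval w)) == y)%:R.

(* A coupling of two finitely supported (mass-function) laws mu, nu on R^d:
   a finite discrete measure on R^d x R^d (list of weighted atoms) with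
   nonnegative weights and marginals mu and nu.  (Every coupling of two
   finitely supported measures is of this form.) *)
Definition is_coupling (d : nat) (mu nu : 'rV[R]_d -> R)
  (c : seq (R * ('rV[R]_d * 'rV[R]_d))) : Prop :=
  (forall a, a \in c -> 0 <= a.1) /\
  (forall z, \sum_(a <- c | a.2.1 == z) a.1 = mu z) /\
  (forall z, \sum_(a <- c | a.2.2 == z) a.1 = nu z).

Definition coupling_cost (d : nat) (c : seq (R * ('rV[R]_d * 'rV[R]_d))) : R :=
  \sum_(a <- c) a.1 * vnorm (a.2.1 - a.2.2) ^+ 2.

Definition W2sq (d : nat) (mu nu : 'rV[R]_d -> R) : R :=
  inf [set coupling_cost c | c in [set c | is_coupling mu nu c]].

End Defs.

(* Main.v *)
Require Import Defs.
From HB Require Import structures.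
From mathcomp Require Import all_boot all_order all_algebra all_fingroup.
From mathcomp Require Import all_classical all_reals all_analysis.
From mathcomp Require Import lra ring.
Import Order.TTheory GRing.Theory Num.Theory.
Import numFieldNormedType.Exports.
Local Open Scope classical_set_scope.
Local Open Scope ring_scope.

Lemma vdotC {R : realType} {d : nat} (u v : 'rV[R]_d) : vdot u v = vdot v u.
Proof. by rewrite /vdot; apply: eq_bigr => i _; rewrite mulrC. Qed.

Lemma vdotDl {R : realType} {d : nat} (u v w : 'rV[R]_d) : vdot (u + v) w = vdot u w + vdot v w.
Proof. by rewrite /vdot -big_split; apply: eq_bigr => i _; rewrite mxE mulrDl. Qed.

Lemma vdotNl {R : realType} {d : nat} (u w : 'rV[R]_d) : vdot (- u) w = - vdot u w.
Proof. by rewrite /vdot -sumrN; apply: eq_bigr => i _; rewrite mxE mulNr. Qed.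

Lemma vdotZl {R : realType} {d : nat} (c : R) (u w : 'rV[R]_d) : vdot (c *: u) w = c * vdot u w.
Proof. by rewrite /vdot mulr_sumr; apply: eq_bigr => i _; rewrite mxE mulrA. Qed.

Lemma vdotBl {R : realType} {d : nat} (u v w : 'rV[R]_d) : vdot (u - v) w = vdot u w - vdot v w.
Proof. by rewrite vdotDl vdotNl. Qed.

Lemma vdotDr {R : realType} {d : nat} (u v w : 'rV[R]_d) : vdot w (u + v) = vdot w u + vdot w v.
Proof. by rewrite vdotC vdotDl !(vdotC w). Qed.
Lemma vdotBr {R : realType} {d : nat} (u v w : 'rV[R]_d) : vdot w (u - v) = vdot w u - vdot w v.
Proof. by rewrite vdotC vdotBl !(vdotC w). Qed.
Lemma vdotZr {R : realType} {d : nat} (c : R) (u w : 'rV[R]_d) : vdot w (c *: u) = c * vdot w u.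
Proof. by rewrite vdotC vdotZl vdotC. Qed.

Lemma vdot0l {R : realType} {d : nat} (w : 'rV[R]_d) : vdot 0 w = 0.
Proof. by rewrite /vdot big1 // => i _; rewrite mxE mul0r. Qed.

Lemma vdot_sumr {R : realType} {d : nat} (I : finType) (P : pred I) (F : I -> 'rV[R]_d) (u : 'rV[R]_d) :
  vdot u (\sum_(i | P i) F i) = \sum_(i | P i) vdot u (F i).
Proof.
apply: (big_rec2 (fun x y => vdot u y = x)); first by rewrite vdotC vdot0l.
by move=> i y1 y2 _ <-; rewrite vdotDr.
Qed.

Lemma vdot_ge0 {R : realType} {d : nat} (u : 'rV[R]_d) : 0 <= vdot u u.
Proof. by apply: sumr_ge0 => i _; rewrite -expr2 sqr_ge0. Qed.

Lemma vnorm_ge0 {R : realType} {d : nat} (u : 'rV[R]_d) : 0 <= vnorm u.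
Proof. exact: sqrtr_ge0. Qed.

Lemma vnorm_sq {R : realType} {d : nat} (u : 'rV[R]_d) : vnorm u ^+ 2 = vdot u u.
Proof. by rewrite /vnorm sqr_sqrtr // vdot_ge0. Qed.

Lemma vnorm0 {R : realType} {d : nat} : vnorm (0 : 'rV[R]_d) = 0.
Proof. by rewrite /vnorm vdot0l sqrtr0. Qed.

Lemma sqr_le_pos {R : realType} (x y : R) : 0 <= y -> x ^+ 2 <= y ^+ 2 -> x <= y.
Proof. move=> y0 h; nra. Qed.

Lemma vdot_zero {R : realType} {d : nat} (u v : 'rV[R]_d) : vdot u u = 0 -> vdot u v = 0.
Proof.
move=> h0.
have H : forall i : 'I_d, true -> u ord0 i * u ord0 i = 0.
  by apply/psumr_eq0P => // i _; rewrite -expr2 sqr_ge0.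
rewrite /vdot big1 // => i _.
by have /eqP := H i isT; rewrite mulf_eq0 orbb => /eqP ->; rewrite mul0r.
Qed.

Lemma vdot_le {R : realType} {d : nat} (u v : 'rV[R]_d) : vdot u v <= vnorm u * vnorm v.
Proof.
set a := vnorm u; set b := vnorm v.
have a0 : 0 <= a by exact: vnorm_ge0.
have b0 : 0 <= b by exact: vnorm_ge0.
have ha : a ^+ 2 = vdot u u by rewrite vnorm_sq.
have hb : b ^+ 2 = vdot v v by rewrite vnorm_sq.
have h := vdot_ge0 (b *: u - a *: v).
rewrite !(vdotBl, vdotBr, vdotZl, vdotZr) -ha -hb (vdotC v u) in h.
have [a0'|az] := eqVneq a 0.
  have hu : vdot u u = 0 by rewrite -ha a0' expr0n.
  by rewrite vdot_zero // a0' mul0r.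
have [b0'|bz] := eqVneq b 0.
  have hv : vdot v v = 0 by rewrite -hb b0' expr0n.
  by rewrite vdotC vdot_zero // b0' mulr0.
have ab : 0 < a * b by rewrite mulr_gt0 // lt0r ?az ?bz.
have : a * b * (vdot u v) <= a * b * (a * b) by nra.
by rewrite ler_pM2l.
Qed.

Lemma vnorm_sqB {R : realType} {d : nat} (u v : 'rV[R]_d) :
  vnorm (u - v) ^+ 2 = vnorm u ^+ 2 - 2 * vdot u v + vnorm v ^+ 2.
Proof. rewrite !vnorm_sq !(vdotBl, vdotBr) (vdotC v u); ring. Qed.

Lemma vnormD_le {R : realType} {d : nat} (u v : 'rV[R]_d) : vnorm (u + v) <= vnorm u + vnorm v.
Proof.
apply: sqr_le_pos; first by rewrite addr_ge0 ?vnorm_ge0.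
have := vdot_le u v.
rewrite vnorm_sq !(vdotDl, vdotDr) -!vnorm_sq (vdotC v u); nra.
Qed.

Lemma vnormZ {R : realType} {d : nat} (c : R) (u : 'rV[R]_d) : vnorm (c *: u) = `|c| * vnorm u.
Proof.
by rewrite /vnorm vdotZl vdotZr mulrA -expr2 sqrtrM ?sqr_ge0 // sqrtr_sqr.
Qed.

Lemma vnormN {R : realType} {d : nat} (u : 'rV[R]_d) : vnorm (- u) = vnorm u.
Proof. by rewrite -scaleN1r vnormZ normrN normr1 mul1r. Qed.

Lemma vnormB_le {R : realType} {d : nat} (u v : 'rV[R]_d) : vnorm (u - v) <= vnorm u + vnorm v.
Proof. by rewrite -(vnormN v) vnormD_le. Qed.

Lemma vnormB_sym {R : realType} {d : nat} (u v : 'rV[R]_d) : vnorm (u - v) = vnorm (v - u).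
Proof. by rewrite -vnormN opprB. Qed.

Lemma vnorm_sum {R : realType} {d : nat} (I : finType) (P : pred I) (F : I -> 'rV[R]_d) :
  vnorm (\sum_(i | P i) F i) <= \sum_(i | P i) vnorm (F i).
Proof.
apply: (big_rec2 (fun x y => vnorm y <= x)); first by rewrite vnorm0.
move=> i y1 y2 _ h; apply: le_trans (vnormD_le _ _) _; lra.
Qed.


Definition step {R : realType} {d p n : nat} (grad : 'rV[R]_d -> 'rV[R]_p -> 'rV[R]_d)
  (xs : 'I_n -> 'rV[R]_p) (eta : R) (b : nat) (t : 'rV[R]_d) (A : {set 'I_n}) :=
  t - (eta / b%:R) *: \sum_(i in A) grad t (xs i).

Lemma sgd_rcons {R : realType} {d p n : nat} grad xs eta b (th : 'rV[R]_d) ws A :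
  sgd grad xs eta b th (rcons ws A) = step (p:=p) (n:=n) grad xs eta b (sgd grad xs eta b th ws) A.
Proof. by rewrite /sgd foldl_rcons. Qed.

Lemma real_step1 {R : realType} (a M N1 eta E m K K1 : R) :
  0 <= a -> a <= M -> 0 <= N1 -> 0 < eta -> eta * m <= 1 -> eta * K1 ^+ 2 <= m -> 0 <= E ->
  0 <= m * M ^+ 2 - 2 * E * M - 2 * K -> eta * E <= M ->
  N1 ^+ 2 <= a ^+ 2 - 2 * eta * (m * a ^+ 2 - K) + eta ^+ 2 * K1 ^+ 2 * a ^+ 2 ->
  N1 + eta * E <= M.
Proof.
move=> a0 aM N0 e0 em eK E0 hM eEM hN.
have h1 : eta ^+ 2 * K1 ^+ 2 * a ^+ 2 <= eta * m * a ^+ 2.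
  have ea : 0 <= eta * a ^+ 2 by rewrite mulr_ge0 ?sqr_ge0 //; lra.
  have -> : eta ^+ 2 * K1 ^+ 2 * a ^+ 2 = (eta * K1 ^+ 2) * (eta * a ^+ 2) by ring.
  have -> : eta * m * a ^+ 2 = m * (eta * a ^+ 2) by ring.
  by rewrite ler_wpM2r.
have h2 : a ^+ 2 <= M ^+ 2 by rewrite ler_sqr ?nnegrE //; lra.
have h3 : (1 - eta * m) * a ^+ 2 <= (1 - eta * m) * M ^+ 2 by rewrite ler_wpM2l //; lra.
have h4 : N1 ^+ 2 <= (M - eta * E) ^+ 2.
  have h5 : 0 <= eta * (m * M ^+ 2 - 2 * E * M - 2 * K) by rewrite mulr_ge0 //; lra.
  have h6 : 0 <= (eta * E) ^+ 2 by rewrite sqr_ge0.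
  nra.
have : N1 <= M - eta * E by apply: sqr_le_pos => //; lra.
lra.
Qed.

Lemma sumr_const_in {R : realType} {I : finType} (A : {set I}) (x : R) :
  \sum_(i in A) x = #|A|%:R * x.
Proof. by rewrite sumr_const mulr_natl. Qed.

Lemma norm_step {R : realType} {d p n : nat} (X : set 'rV[R]_p)
  (grad : 'rV[R]_d -> 'rV[R]_p -> 'rV[R]_d) (xs : 'I_n -> 'rV[R]_p)
  (E K1 K2 m K eta M : R) (b : nat) (A : {set 'I_n}) (u : 'rV[R]_d) :
  (forall x, x \in X -> vnorm (grad 0 x) <= E) ->
  (forall th th' x x', x \in X -> x' \in X ->
     vnorm (grad th x - grad th' x') <=
       K1 * vnorm (th - th') + K2 * vnorm (x - x') * (vnorm th + vnorm th' + 1)) ->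
  (forall th1 th2 x, x \in X ->
     vdot (grad th1 x - grad th2 x) (th1 - th2) >= m * vnorm (th1 - th2) ^+ 2 - K) ->
  (forall i, xs i \in X) ->
  (0 < b)%N -> #|A| = b ->
  0 < eta -> eta * m <= 1 -> eta * K1 ^+ 2 <= m -> 0 <= E ->
  0 <= m * M ^+ 2 - 2 * E * M - 2 * K -> eta * E <= M ->
  vnorm u <= M -> vnorm (step grad xs eta b u A) <= M.
Proof.
move=> hE hA1 hA3 hX b0 hA e0 em eK E0 hM eEM uM.
rewrite /step.
set c := eta / b%:R.
have bR : 0 < b%:R :> R by rewrite ltr0n.
have cb : c * b%:R = eta by rewrite /c mulfVK // gt_eqF.
have c0 : 0 <= c by rewrite /c divr_ge0 // ltW.
set S1 := \sum_(i in A) (grad u (xs i) - grad 0 (xs i)).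
set S0 := \sum_(i in A) grad 0 (xs i).
have -> : \sum_(i in A) grad u (xs i) = S1 + S0.
  by rewrite /S1 /S0 -big_split /=; apply: eq_bigr => i _; rewrite subrK.
have -> : u - c *: (S1 + S0) = (u - c *: S1) - c *: S0.
  by rewrite scalerDr opprD addrA.
apply: le_trans (vnormB_le _ _) _.
have hS0 : vnorm (c *: S0) <= eta * E.
  rewrite vnormZ ger0_norm //.
  apply: le_trans (ler_wpM2l c0 (vnorm_sum _ _ _)) _.
  have hs : \sum_(i in A) vnorm (grad 0 (xs i)) <= \sum_(i in A) E by apply: ler_sum => i _; apply: hE.
  apply: le_trans (ler_wpM2l c0 hs) _.
  by rewrite sumr_const_in hA mulrA cb.
set a := vnorm u.
have hdot : #|A|%:R * (m * a ^+ 2 - K) <= vdot u S1.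
  rewrite vdot_sumr -sumr_const_in; apply: ler_sum => i _.
  have := hA3 u 0 (xs i) (hX i); rewrite subr0 vdotC //.
have hS1 : vnorm S1 <= #|A|%:R * (K1 * a).
  apply: le_trans (vnorm_sum _ _ _) _; rewrite -sumr_const_in; apply: ler_sum => i _.
  have := hA1 u 0 (xs i) (xs i) (hX i) (hX i).
  by rewrite subr0 subrr !vnorm0 mulr0 mul0r addr0.
rewrite hA in hdot hS1.
have hN : vnorm (u - c *: S1) ^+ 2 <= a ^+ 2 - 2 * eta * (m * a ^+ 2 - K) + eta ^+ 2 * K1 ^+ 2 * a ^+ 2.
  rewrite vnorm_sqB vdotZr vnormZ ger0_norm // -/a.
  have h1 : 2 * eta * (m * a ^+ 2 - K) <= 2 * c * vdot u S1.
    have -> : 2 * eta * (m * a ^+ 2 - K) = 2 * c * (b%:R * (m * a ^+ 2 - K)) by rewrite -cb; ring.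
    rewrite ler_wpM2l //; lra.
  have h2 : (c * vnorm S1) ^+ 2 <= eta ^+ 2 * K1 ^+ 2 * a ^+ 2.
    have h3 : c * vnorm S1 <= eta * (K1 * a) by rewrite -cb -mulrA ler_wpM2l.
    have h4 : 0 <= c * vnorm S1 by rewrite mulr_ge0 ?vnorm_ge0.
    have -> : eta ^+ 2 * K1 ^+ 2 * a ^+ 2 = (eta * (K1 * a)) ^+ 2 by ring.
    nra.
  lra.
have := @real_step1 R a M _ eta E m K K1 (vnorm_ge0 u) uM (vnorm_ge0 _) e0 em eK E0 hM eEM hN.
lra.
Qed.

Lemma sgd_bound {R : realType} {d p n : nat} (X : set 'rV[R]_p)
  (grad : 'rV[R]_d -> 'rV[R]_p -> 'rV[R]_d) (xs : 'I_n -> 'rV[R]_p)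
  (E K1 K2 m K eta M : R) (b : nat) (ws : seq {set 'I_n}) (th : 'rV[R]_d) :
  (forall x, x \in X -> vnorm (grad 0 x) <= E) ->
  (forall th th' x x', x \in X -> x' \in X ->
     vnorm (grad th x - grad th' x') <=
       K1 * vnorm (th - th') + K2 * vnorm (x - x') * (vnorm th + vnorm th' + 1)) ->
  (forall th1 th2 x, x \in X ->
     vdot (grad th1 x - grad th2 x) (th1 - th2) >= m * vnorm (th1 - th2) ^+ 2 - K) ->
  (forall i, xs i \in X) ->
  (0 < b)%N ->
  0 < eta -> eta * m <= 1 -> eta * K1 ^+ 2 <= m -> 0 <= E ->
  0 <= m * M ^+ 2 - 2 * E * M - 2 * K -> eta * E <= M ->
  all (fun A : {set 'I_n} => #|A| == b) ws ->
  vnorm th <= M -> vnorm (sgd grad xs eta b th ws) <= M.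
Proof.
move=> hE hA1 hA3 hX b0 e0 em eK E0 hM eEM.
elim: ws th => //= A ws IH th /andP[/eqP hA hws] thM.
apply: IH => //.
exact: (@norm_step R d p n X grad xs E K1 K2 m K eta M b A th hE hA1 hA3 hX b0 hA e0 em eK E0 hM eEM thM).
Qed.

Lemma real_step2 {R : realType} (δ σ c bb η m K K1 P Q N : R) :
  0 <= δ -> 0 <= σ -> 0 <= c -> c * bb = η -> 0 <= K1 -> 0 < η -> η * K1 ^+ 2 <= m ->
  bb * (m * δ ^+ 2 - K) <= P -> - (δ * σ) <= Q -> 0 <= N -> N <= bb * K1 * δ + σ ->
  δ ^+ 2 - 2 * (c * (P + Q)) + (c * N) ^+ 2 <=
  (1 - η * m) * δ ^+ 2 + 2 * η * K + 2 * c * δ * σ * (1 + η * K1) + c ^+ 2 * σ ^+ 2.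
Proof.
move=> d0 s0 c0 cb K10 e0 eK hP hQ N0 hN.
have h1 : 2 * η * (m * δ ^+ 2 - K) <= 2 * (c * P).
  have -> : 2 * η * (m * δ ^+ 2 - K) = 2 * (c * (bb * (m * δ ^+ 2 - K))) by rewrite -cb; ring.
  by rewrite ler_pM2l // ler_wpM2l.
have h2 : - (2 * (c * (δ * σ))) <= 2 * (c * Q).
  by rewrite -mulrN ler_pM2l // -mulrN ler_wpM2l.
have h3 : c * N <= η * K1 * δ + c * σ.
  have -> : η * K1 * δ + c * σ = c * (bb * K1 * δ + σ) by rewrite -cb; ring.
  by rewrite ler_wpM2l.
have h4 : (c * N) ^+ 2 <= (η * K1 * δ + c * σ) ^+ 2.
  have : 0 <= c * N by rewrite mulr_ge0.
  nra.
have h5 : η ^+ 2 * K1 ^+ 2 * δ ^+ 2 <= η * m * δ ^+ 2.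
  have ea : 0 <= η * δ ^+ 2 by rewrite mulr_ge0 ?sqr_ge0 //; lra.
  have -> : η ^+ 2 * K1 ^+ 2 * δ ^+ 2 = (η * K1 ^+ 2) * (η * δ ^+ 2) by ring.
  have -> : η * m * δ ^+ 2 = m * (η * δ ^+ 2) by ring.
  by rewrite ler_wpM2r.
have e : (η * K1 * δ + c * σ) ^+ 2 = η ^+ 2 * K1 ^+ 2 * δ ^+ 2 + 2 * c * δ * σ * (η * K1) + c ^+ 2 * σ ^+ 2 by ring.
rewrite e in h4.
lra.
Qed.

Lemma sum_ind_in {R : realType} {n : nat} (A : {set 'I_n}) (j : 'I_n) :
  \sum_(i in A) ((i == j)%:R : R) = (j \in A)%:R.
Proof.
case: (boolP (j \in A)) => hj.
  rewrite (bigD1 j) //= eqxx big1 ?addr0 // => i /andP[_ /negbTE ->] //.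
by rewrite big1 // => i hi; case: eqP => // eij; rewrite -eij hi in hj.
Qed.

Lemma delta_step {R : realType} {d p n : nat} (X : set 'rV[R]_p)
  (grad : 'rV[R]_d -> 'rV[R]_p -> 'rV[R]_d) (xs xhs : 'I_n -> 'rV[R]_p)
  (D K1 K2 m K eta M : R) (b : nat) (A : {set 'I_n}) (j : 'I_n) (u uh : 'rV[R]_d) :
  (forall x, x \in X -> vnorm x <= D) ->
  (forall th th' x x', x \in X -> x' \in X ->
     vnorm (grad th x - grad th' x') <=
       K1 * vnorm (th - th') + K2 * vnorm (x - x') * (vnorm th + vnorm th' + 1)) ->
  (forall th1 th2 x, x \in X ->
     vdot (grad th1 x - grad th2 x) (th1 - th2) >= m * vnorm (th1 - th2) ^+ 2 - K) ->
  (forall i, xs i \in X) -> (forall i, xhs i \in X) ->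
  (forall i, i != j -> xs i = xhs i) ->
  (0 < b)%N -> #|A| = b ->
  0 < eta -> eta * K1 ^+ 2 <= m -> 0 <= K1 -> 0 <= K2 -> 0 <= D ->
  vnorm u <= M -> vnorm uh <= M ->
  vnorm (step grad xs eta b u A - step grad xhs eta b uh A) ^+ 2 <=
  (1 - eta * m) * vnorm (u - uh) ^+ 2 + 2 * eta * K +
  (j \in A)%:R * (4 * (eta / b%:R) * D * K2 * (1 + eta * K1) * (1 + 5 * M ^+ 2)
                  + (eta / b%:R) ^+ 2 * (4 * D ^+ 2 * K2 ^+ 2) * (8 * M ^+ 2 + 2)).
Proof.
move=> hD hA1 hA3 hX hXh hj b0 hA e0 eK K10 K20 D0 uM uhM.
set c := eta / b%:R.
have bR : 0 < b%:R :> R by rewrite ltr0n.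
have cb : c * b%:R = eta by rewrite /c mulfVK // gt_eqF.
have c0 : 0 <= c by rewrite /c divr_ge0 // ltW.
have M0 : 0 <= M by apply: le_trans uM; apply: vnorm_ge0.
set SG := \sum_(i in A) (grad u (xs i) - grad uh (xs i)).
set SH := \sum_(i in A) (grad uh (xs i) - grad uh (xhs i)).
set V := u - uh.
have -> : step grad xs eta b u A - step grad xhs eta b uh A = V - c *: (SG + SH).
  rewrite /step /V /SG /SH -big_split /=.
  have -> : \sum_(i in A) (grad u (xs i) - grad uh (xs i) + (grad uh (xs i) - grad uh (xhs i)))
     = \sum_(i in A) grad u (xs i) - \sum_(i in A) grad uh (xhs i).
    rewrite -sumrB; apply: eq_bigr => i _ /=; rewrite addrA subrK //.
  rewrite scalerBr; rewrite /c; set s1 := (eta / b%:R) *: _; set s2 := (eta / b%:R) *: _.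
  by rewrite /c !opprB addrACA [RHS]addrACA; congr (_ + _); rewrite addrC.
clearbody c.
set δ := vnorm V.
set h := 2 * D * K2 * (2 * M + 1).
have hP : b%:R * (m * δ ^+ 2 - K) <= vdot V SG.
  rewrite vdot_sumr -hA -sumr_const_in; apply: ler_sum => i _.
  by rewrite vdotC; apply: hA3.
have hQ : - (δ * vnorm SH) <= vdot V SH.
  have := vdot_le (- V) SH; rewrite vnormN vdotNl -/δ; lra.
have hSG : vnorm SG <= b%:R * K1 * δ.
  apply: le_trans (vnorm_sum _ _ _) _; rewrite -mulrA -hA -sumr_const_in; apply: ler_sum => i _.
  have := hA1 u uh (xs i) (xs i) (hX i) (hX i).
  by rewrite subrr !vnorm0 mulr0 mul0r addr0.
have hN : vnorm (SG + SH) <= b%:R * K1 * δ + vnorm SH.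
  apply: le_trans (vnormD_le _ _) _; lra.
have := @real_step2 R δ (vnorm SH) c b%:R eta m K K1 (vdot V SG) (vdot V SH) (vnorm (SG + SH))
  (vnorm_ge0 _) (vnorm_ge0 _) c0 cb K10 e0 eK hP hQ (vnorm_ge0 _) hN.
move=> H; rewrite (vnorm_sqB V) vdotZr vnormZ ger0_norm // -/δ vdotDr.
apply: le_trans H _.
suff : 2 * c * δ * vnorm SH * (1 + eta * K1) + c ^+ 2 * vnorm SH ^+ 2 <=
  (j \in A)%:R * (4 * c * D * K2 * (1 + eta * K1) * (1 + 5 * M ^+ 2)
                  + c ^+ 2 * (4 * D ^+ 2 * K2 ^+ 2) * (8 * M ^+ 2 + 2)) by lra.
have hd : δ <= 2 * M.
  by apply: le_trans (vnormB_le _ _) _; lra.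
have hH : vnorm SH <= (j \in A)%:R * h.
  apply: le_trans (vnorm_sum _ _ _) _.
  rewrite -sum_ind_in mulr_suml; apply: ler_sum => i _.
  case: eqP => [->|/eqP nij].
    rewrite mul1r; apply: le_trans (hA1 _ _ _ _ (hX j) (hXh j)) _.
    rewrite subrr vnorm0 mulr0 add0r /h.
    have hx : vnorm (xs j - xhs j) <= 2 * D.
      apply: le_trans (vnormB_le _ _) _; have := hD _ (hX j); have := hD _ (hXh j); lra.
    have hm : vnorm uh + vnorm uh + 1 <= 2 * M + 1 by lra.
    have -> : 2 * D * K2 * (2 * M + 1) = K2 * (2 * D) * (2 * M + 1) by ring.
    rewrite -mulrA -mulrA ler_wpM2l // ler_pM ?vnorm_ge0 //.
    by rewrite addr_ge0 ?ler01 // addr_ge0 ?vnorm_ge0.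
  by rewrite hj // subrr vnorm0 mul0r.
have s0 := vnorm_ge0 SH.
have d0 := vnorm_ge0 V; rewrite -/δ in d0.
have h0 : 0 <= h by rewrite /h !mulr_ge0 //; lra.
have eK1 : 0 <= 1 + eta * K1 by rewrite addr_ge0 // mulr_ge0 //; lra.
case: (j \in A) hH => /= hH; last first.
  rewrite mul0r in hH.
  have -> : vnorm SH = 0 by apply/le_anti; rewrite hH s0.
  rewrite mul0r; lra.
rewrite mul1r in hH *.
have t1 : 2 * c * δ * vnorm SH * (1 + eta * K1) <= 2 * c * (2 * M) * h * (1 + eta * K1).
  rewrite ler_wpM2r //.
  have hc2 : 0 <= 2 * c by rewrite mulr_ge0.
  have -> : 2 * c * δ * vnorm SH = (2 * c) * (δ * vnorm SH) by ring.
  have -> : 2 * c * (2 * M) * h = (2 * c) * ((2 * M) * h) by ring.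
  rewrite ler_wpM2l // ler_pM //.
have t2 : 2 * c * (2 * M) * h * (1 + eta * K1) <= 4 * c * D * K2 * (1 + eta * K1) * (1 + 5 * M ^+ 2).
  have -> : 2 * c * (2 * M) * h * (1 + eta * K1) = 4 * c * D * K2 * (1 + eta * K1) * (2 * M * (2 * M + 1)) by rewrite /h; ring.
  apply: ler_wpM2l; first by (repeat apply: mulr_ge0); lra.
  have := sqr_ge0 (M - 1); nra.
have t3 : c ^+ 2 * vnorm SH ^+ 2 <= c ^+ 2 * (4 * D ^+ 2 * K2 ^+ 2) * (8 * M ^+ 2 + 2).
  rewrite -mulrA ler_wpM2l ?sqr_ge0 //.
  have : vnorm SH ^+ 2 <= h ^+ 2 by rewrite ler_sqr ?nnegrE.
  have : h ^+ 2 <= 4 * D ^+ 2 * K2 ^+ 2 * (8 * M ^+ 2 + 2).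
    have -> : h ^+ 2 = 4 * D ^+ 2 * K2 ^+ 2 * (2 * M + 1) ^+ 2 by rewrite /h; ring.
    apply: ler_wpM2l; first by (repeat apply: mulr_ge0); rewrite ?sqr_ge0 //; lra.
    have := sqr_ge0 (2 * M - 1); nra.
  lra.
lra.
Qed.


Local Close Scope classical_set_scope.

Lemma sum_tuple_rcons {R : realType} {T : finType} (k : nat) (G : (k.+1).-tuple T -> R) :
  \sum_(w : (k.+1).-tuple T) G w = \sum_(w : k.-tuple T) \sum_(A : T) G (rcons_tuple w A).
Proof.
rewrite pair_bigA /=.
have hinj : injective (fun p : k.-tuple T * T => rcons_tuple p.1 p.2).
  move=> [w1 a1] [w2 a2] /(congr1 val) /= /rcons_inj [/val_inj -> ->] //.
have hb := inj_card_bij hinj.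
rewrite (reindex (fun p : k.-tuple T * T => rcons_tuple p.1 p.2)) //.
apply: onW_bij; apply: hb.
by rewrite card_prod !card_tuple expnSr.
Qed.

Lemma card_bsub_gt0 (n b : nat) : (b <= n)%N -> (0 < #|{: bsubset n b}|)%N.
Proof.
move=> bn; rewrite /bsubset card_sig.
have := card_draws 'I_n b; rewrite card_ord => h.
have -> : #|[pred x : {set 'I_n} | #|x| == b]| = #|[set A : {set 'I_n} | #|A| == b]|.
  by apply: eq_card => A; rewrite inE.
by rewrite h bin_gt0.
Qed.

Lemma sum_mem_card {R : realType} {n : nat} (A : {set 'I_n}) :
  \sum_(i : 'I_n) ((i \in A)%:R : R) = #|A|%:R.
Proof.
rewrite (bigID (fun i => i \in A)) /= [X in _ + X]big1 ?addr0; last by move=> i /negbTE ->.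
rewrite (eq_bigr (fun _ => 1)); last by move=> i ->.
by rewrite sumr_const.
Qed.

Lemma cnt_sym {R : realType} (n b : nat) (i j : 'I_n) :
  \sum_(A : bsubset n b) ((i \in val A)%:R : R) = \sum_(A : bsubset n b) ((j \in val A)%:R : R).
Proof.
set s := tperm i j.
have hc : forall A : bsubset n b, #|[set s x | x in val A]| == b.
  by move=> A; rewrite card_imset ?(valP A) //; exact: perm_inj.
pose f (A : bsubset n b) : bsubset n b := exist (fun B : {set 'I_n} => #|B| == b) _ (hc A).
have fK : cancel f f.
  move=> A; apply/val_inj => /=.
  rewrite -imset_comp -[RHS]imset_id; apply: eq_imset => x /=.
  by rewrite tpermK.
rewrite (reindex_inj (can_inj fK)) /=.
apply: eq_bigr => A _.
by rewrite -{1}(tpermR i j) mem_imset //; exact: perm_inj.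
Qed.

Lemma cnt_ratio {R : realType} (n b : nat) (j : 'I_n) :
  n%:R * \sum_(A : bsubset n b) ((j \in val A)%:R : R) = #|{: bsubset n b}|%:R * b%:R.
Proof.
have e1 : \sum_(i : 'I_n) \sum_(A : bsubset n b) ((i \in val A)%:R : R)
   = \sum_(i : 'I_n) \sum_(A : bsubset n b) ((j \in val A)%:R : R).
  by apply: eq_bigr => i _; apply: cnt_sym.
rewrite sumr_const (card_ord n) -mulr_natl in e1.
rewrite -e1 exchange_big /=.
rewrite (eq_bigr (fun _ => (b%:R : R))); first by rewrite sumr_const mulr_natl.
by move=> A _; rewrite sum_mem_card (eqP (valP A)).
Qed.

Lemma sumr_constT {R : realType} {T : finType} (x : R) : \sum_(A : T) x = #|T|%:R * x.
Proof. by rewrite sumr_const mulr_natl. Qed.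

Lemma avg_induct {R : realType} {T : finType} (F : forall k, k.-tuple T -> R) (iota : T -> R)
  (q al tau C rho : R) :
  (0 < #|T|)%N -> \sum_(A : T) iota A = rho * #|T|%:R -> 0 <= q -> (1 - q) * C = al + rho * tau ->
  (forall w : 0.-tuple T, F 0%N w = 0) ->
  (forall k (w : k.-tuple T) (A : T), F k.+1 (rcons_tuple w A) <= q * F k w + al + iota A * tau) ->
  forall k, \sum_(w : k.-tuple T) (#|T|%:R ^- k) * F k w <= (1 - q ^+ k) * C.
Proof.
move=> T0 hiota q0 hC hF0 hstep.
set N : R := #|T|%:R.
have N0 : N != 0 by rewrite pnatr_eq0 -lt0n.
have hsum1 : forall k, \sum_(w : k.-tuple T) N ^- k = 1.
  by move=> k; rewrite sumr_constT card_tuple natrX mulfV // expf_neq0.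
elim=> [|k IH].
  by rewrite expr0 subrr mul0r big1 // => w _; rewrite hF0 mulr0.
rewrite sum_tuple_rcons.
have step1 : forall w : k.-tuple T,
   \sum_(A : T) N ^- k.+1 * F k.+1 (rcons_tuple w A) <= N ^- k * (q * F k w + al + rho * tau).
  move=> w.
  apply: le_trans (_ : \sum_(A : T) N ^- k.+1 * (q * F k w + al + iota A * tau) <= _).
    apply: ler_sum => A _; apply: ler_wpM2l; first by rewrite invr_ge0 exprn_ge0 ?ler0n.
    exact: hstep.
  rewrite -mulr_sumr big_split /= -big_distrl /= hiota sumr_constT -/N.
  rewrite le_eqVlt; apply/orP; left; apply/eqP.
  by rewrite exprSr invfM; field; rewrite expf_neq0.
apply: le_trans (ler_sum _ (fun w _ => step1 w)) _.
rewrite (eq_bigr (fun w => q * (N ^- k * F k w) + N ^- k * (al + rho * tau))); last first.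
  by move=> w _; ring.
rewrite big_split /= -mulr_sumr -mulr_suml hsum1 mul1r -hC.
have : q * (\sum_(w : k.-tuple T) N ^- k * F k w) <= q * ((1 - q ^+ k) * C) by rewrite ler_wpM2l.
rewrite exprS; lra.
Qed.


Local Open Scope classical_set_scope.

Lemma M_facts {R : realType} (v E m K eta r : R) :
  0 <= v -> 0 <= E -> 0 < m -> 0 <= K -> 0 < eta -> eta * m <= 1 ->
  r = (E + Num.sqrt (E ^+ 2 + 4 * m * K)) / (2 * m) ->
  exists M, [/\ v <= M, 0 <= m * M ^+ 2 - 2 * E * M - 2 * K, eta * E <= M &
     M ^+ 2 <= v ^+ 2 + 4 * r ^+ 2].
Proof.
move=> v0 E0 m0 K0 e0 em hr.
set q := Num.sqrt (E ^+ 2 + 2 * m * K).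
set q' := Num.sqrt (E ^+ 2 + 4 * m * K).
have mK : 0 <= m * K by rewrite mulr_ge0 // ltW.
have hq : q ^+ 2 = E ^+ 2 + 2 * m * K by rewrite sqr_sqrtr //; nra.
have hq0 : 0 <= q by apply: sqrtr_ge0.
have hqE : E <= q.
  by rewrite -(ger0_norm E0) -sqrtr_sqr ler_sqrt; nra.
have hqq : q <= q' by rewrite ler_sqrt; nra.
set s := (E + q) / m.
have ms : m * s = E + q by rewrite /s mulrC divfK ?gt_eqF.
have hs : m * s ^+ 2 - 2 * E * s - 2 * K = 0.
  have h1 : s * (q - E) * m = 2 * K * m.
    have -> : s * (q - E) * m = (m * s) * (q - E) by ring.
    rewrite ms; have -> : (E + q) * (q - E) = q ^+ 2 - E ^+ 2 by ring.
    rewrite hq; ring.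
  have h2 : s * (q - E) = 2 * K by apply: (mulIf (lt0r_neq0 m0)).
  have -> : m * s ^+ 2 - 2 * E * s - 2 * K = s * (m * s) - 2 * E * s - 2 * K by ring.
  rewrite ms; have -> : s * (E + q) - 2 * E * s - 2 * K = s * (q - E) - 2 * K by ring.
  by rewrite h2 subrr.
have s0 : 0 <= s by rewrite /s divr_ge0 //; lra.
have hs2E : 2 * E <= m * s by rewrite ms; lra.
have hr2 : 2 * r = (E + q') / m.
  have h : r * (2 * m) = E + q' by rewrite hr divfK // mulf_neq0 ?gt_eqF //; lra.
  apply: (mulIf (lt0r_neq0 m0)); rewrite divfK ?gt_eqF // -h; ring.
have hs2r : s <= 2 * r by rewrite hr2 /s ler_pM2r ?invr_gt0 //; lra.
have hss : s ^+ 2 <= 4 * r ^+ 2.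
  have -> : 4 * r ^+ 2 = (2 * r) ^+ 2 by ring.
  by rewrite ler_sqr ?nnegrE //; lra.
have [M [vM sM MM]] : exists M, [/\ v <= M, s <= M & M ^+ 2 <= v ^+ 2 + s ^+ 2].
  case: (lerP v s) => h.
    by exists s; split => //; have := sqr_ge0 v; lra.
  by exists v; split => //; [lra | have := sqr_ge0 s; lra].
exists M; split => //.
- have : (M - s) * (m * (M + s) - 2 * E) >= 0.
    apply: mulr_ge0; first lra.
    have : m * s <= m * M by rewrite ler_pM2l.
    lra.
  have -> : m * M ^+ 2 - 2 * E * M - 2 * K =
    (M - s) * (m * (M + s) - 2 * E) + (m * s ^+ 2 - 2 * E * s - 2 * K) by ring.
  rewrite hs; lra.
- apply: le_trans sM.
  have : eta * E * m <= E.
    have := ler_wpM2l E0 em; rewrite mulr1 => H; apply: le_trans H.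
    by rewrite le_eqVlt; apply/orP; left; apply/eqP; ring.
  have : E <= m * s - E by lra.
  nra.
- lra.
Qed.
Theorem theorem4p1 (R : realType) (d p n b : nat) (X : set 'rV[R]_p)
  (f : 'rV[R]_d -> 'rV[R]_p -> R) (grad : 'rV[R]_d -> 'rV[R]_p -> 'rV[R]_d)
  (D E K1 K2 m K eta : R) (xs xhs : 'I_n -> 'rV[R]_p) (theta : 'rV[R]_d) :
  (* grad is the gradient of f in theta *)
  (forall (x : 'rV[R]_p) (th : 'rV[R]_d), x \in X ->
     differentiable (fun t => f t x) th /\
     forall v, 'd (fun t => f t x) th v = vdot (grad th x) v) ->
  (forall x, x \in X -> vnorm x <= D) ->
  (forall x, x \in X -> vnorm (grad 0 x) <= E) ->
  (* (A1) *)
  0 < K1 -> 0 < K2 ->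
  (forall th th' x x', x \in X -> x' \in X ->
     vnorm (grad th x - grad th' x') <=
       K1 * vnorm (th - th') + K2 * vnorm (x - x') * (vnorm th + vnorm th' + 1)) ->
  (* (A3) *)
  0 < m -> 0 < K ->
  (forall th1 th2 x, x \in X ->
     vdot (grad th1 x - grad th2 x) (th1 - th2) >= m * vnorm (th1 - th2) ^+ 2 - K) ->
  (* data sets in X^n differing in at most one index *)
  (forall i, xs i \in X) -> (forall i, xhs i \in X) ->
  (exists j : 'I_n, forall i, i != j -> xs i = xhs i) ->
  (0 < b)%N -> (b <= n)%N ->
  (* step size *)
  0 < eta -> eta < m^-1 -> eta < m / (K1 ^+ 2 + 64 * D ^+ 2 * K2 ^+ 2) ->
  forall k : nat,
  let r := (E + Num.sqrt (E ^+ 2 + 4 * m * K)) / (2 * m) in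
  let B := 4 * vnorm theta ^+ 2 + 4 * r ^+ 2 + 4 - (2 * eta / m) * K1 ^+ 2
           - (112 * eta / m) * D ^+ 2 * K2 ^+ 2
           + (128 * eta / m) * D ^+ 2 * K2 ^+ 2 * r ^+ 2 + 4 * K / m + 2 * r ^+ 2 in
  W2sq (sgd_law grad xs eta b theta k) (sgd_law grad xhs eta b theta k) <=
    (1 - (1 - eta * m) ^+ k) *
    (4 * D ^+ 2 * K2 ^+ 2 * eta * (8 * B + 2) / (b%:R * n%:R * m)
     + 4 * K2 * D * (1 + K1 * eta) / (n%:R * m) * (1 + 5 * B)
     + 2 * K / m).
Proof.
move=> hdiff hD hE K10 K20 hA1 m0 K0 hA3 hX hXh [j hj] b0 bn e0 em eK k.
cbv zeta.
set r := (E + Num.sqrt (E ^+ 2 + 4 * m * K)) / (2 * m).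
set B := 4 * vnorm theta ^+ 2 + 4 * r ^+ 2 + 4 - (2 * eta / m) * K1 ^+ 2
           - (112 * eta / m) * D ^+ 2 * K2 ^+ 2
           + (128 * eta / m) * D ^+ 2 * K2 ^+ 2 * r ^+ 2 + 4 * K / m + 2 * r ^+ 2.
have n0 : (0 < n)%N by apply: leq_trans b0 bn.
pose i0 : 'I_n := Ordinal n0.
have E0 : 0 <= E by apply: le_trans (hE _ (hX i0)); apply: vnorm_ge0.
have D0 : 0 <= D by apply: le_trans (hD _ (hX i0)); apply: vnorm_ge0.
have em1 : eta * m <= 1.
  have : eta * m < m^-1 * m by rewrite ltr_pM2r.
  rewrite mulVf ?gt_eqF //; lra.
have S0 : 0 < K1 ^+ 2 + 64 * D ^+ 2 * K2 ^+ 2.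
  have : 0 < K1 ^+ 2 by rewrite exprn_gt0.
  have : 0 <= D ^+ 2 * K2 ^+ 2 by rewrite mulr_ge0 ?sqr_ge0.
  lra.
have hS : eta * (K1 ^+ 2 + 64 * D ^+ 2 * K2 ^+ 2) < m by rewrite -ltr_pdivlMr.
have Q0 : 0 <= eta * (D ^+ 2 * K2 ^+ 2) by rewrite mulr_ge0 ?sqr_ge0 ?mulr_ge0 ?sqr_ge0 //; lra.
have eK1 : eta * K1 ^+ 2 <= m.
  have : eta * (K1 ^+ 2 + 64 * D ^+ 2 * K2 ^+ 2) = eta * K1 ^+ 2 + 64 * (eta * (D ^+ 2 * K2 ^+ 2)) by ring.
  lra.
have [M [vM hM eEM MM]] := @M_facts R (vnorm theta) E m K eta r (vnorm_ge0 theta) E0 m0 (ltW K0) e0 em1 (erefl r).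
have MB : M ^+ 2 <= B.
  apply: le_trans MM _.
  have im0 : 0 < m^-1 by rewrite invr_gt0.
  have key : (2 * eta / m) * K1 ^+ 2 + (112 * eta / m) * D ^+ 2 * K2 ^+ 2 <= 2.
    have -> : (2 * eta / m) * K1 ^+ 2 + (112 * eta / m) * D ^+ 2 * K2 ^+ 2
       = m^-1 * (2 * (eta * K1 ^+ 2) + 112 * (eta * (D ^+ 2 * K2 ^+ 2))) by ring.
    have e2 : m^-1 * (2 * m) = 2 by rewrite mulrC -mulrA mulfV ?gt_eqF ?mulr1.
    rewrite -[X in _ <= X]e2 ler_pM2l //.
    have : eta * (K1 ^+ 2 + 64 * D ^+ 2 * K2 ^+ 2) = eta * K1 ^+ 2 + 64 * (eta * (D ^+ 2 * K2 ^+ 2)) by ring.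
    lra.
  have t1 : 0 <= (128 * eta / m) * D ^+ 2 * K2 ^+ 2 * r ^+ 2.
    apply: mulr_ge0; last exact: sqr_ge0.
    rewrite !mulr_ge0 ?sqr_ge0 ?invr_ge0 //; lra.
  have t2 : 0 <= 4 * K / m by rewrite !mulr_ge0 ?invr_ge0 //; lra.
  have t3 := sqr_ge0 (vnorm theta).
  have t4 := sqr_ge0 r.
  rewrite /B; lra.
pose T := bsubset n b.
have NT : (0 < #|{: T}|)%N by apply: card_bsub_gt0.
pose F := fun k (w : k.-tuple T) =>
  vnorm (sgd grad xs eta b theta (map val (tval w)) - sgd grad xhs eta b theta (map val (tval w))) ^+ 2.
pose cp := [seq ((#|{: T}|%:R ^- k : R), (sgd grad xs eta b theta (map val (tval w)),
                 sgd grad xhs eta b theta (map val (tval w)))) | w <- index_enum {: k.-tuple T}].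
have hc : is_coupling (sgd_law grad xs eta b theta k) (sgd_law grad xhs eta b theta k) cp.
  split; [|split].
  - by move=> a /mapP [w _ ->] /=; rewrite invr_ge0 exprn_ge0 ?ler0n.
  - move=> z; rewrite /sgd_law big_map big_mkcond /=; apply: eq_bigr => w _.
    by case: (_ == z); rewrite ?mulr1 ?mulr0.
  - move=> z; rewrite /sgd_law big_map big_mkcond /=; apply: eq_bigr => w _.
    by case: (_ == z); rewrite ?mulr1 ?mulr0.
have hW : W2sq (sgd_law grad xs eta b theta k) (sgd_law grad xhs eta b theta k)
   <= \sum_(w : k.-tuple T) (#|{: T}|%:R ^- k) * F k w.
  have lb : has_lbound [set coupling_cost c | c in [set c | is_coupling (sgd_law grad xs eta b theta k) (sgd_law grad xhs eta b theta k) c]].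
    exists 0 => y [c' hc' <-]; rewrite /coupling_cost big_seq_cond.
    apply: sumr_ge0 => a /andP[ha _]; apply: mulr_ge0; first exact: hc'.1.
    exact: sqr_ge0.
  have := ge_inf lb; apply.
  by exists cp => //; rewrite /coupling_cost big_map.
apply: le_trans hW _.
have bR : 0 < b%:R :> R by rewrite ltr0n.
have nR : 0 < n%:R :> R by rewrite ltr0n.
pose c := eta / b%:R.
have c0 : 0 <= c by rewrite /c divr_ge0 // ltW.
pose Tb := 4 * c * D * K2 * (1 + eta * K1) * (1 + 5 * B)
           + c ^+ 2 * (4 * D ^+ 2 * K2 ^+ 2) * (8 * B + 2).
apply: (@avg_induct R T F (fun A => (j \in val A)%:R) (1 - eta * m) (2 * eta * K) Tb _ (b%:R / n%:R)) => //.
- apply: (mulfI (lt0r_neq0 nR)); rewrite cnt_ratio; field.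
  by rewrite gt_eqF.
- lra.
- rewrite /Tb /c; field.
  by rewrite !gt_eqF.
- move=> w; rewrite /F (size0nil (size_tuple w)) /= subrr vnorm0 expr0n //.
move=> k' w A; rewrite /F /= map_rcons !sgd_rcons.
have hall : all (fun A0 : {set 'I_n} => #|A0| == b) (map val (tval w)).
  by rewrite all_map; apply/allP => x _ /=; exact: (valP x).
have hu := @sgd_bound R d p n X grad xs E K1 K2 m K eta M b _ theta hE hA1 hA3 hX b0 e0 em1 eK1 E0 hM eEM hall vM.
have huh := @sgd_bound R d p n X grad xhs E K1 K2 m K eta M b _ theta hE hA1 hA3 hXh b0 e0 em1 eK1 E0 hM eEM hall vM.
have H := @delta_step R d p n X grad xs xhs D K1 K2 m K eta M b (val A) j _ _ hD hA1 hA3 hX hXh hj b0 (eqP (valP A)) e0 eK1 (ltW K10) (ltW K20) D0 hu huh.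
apply: le_trans H _.
rewrite lerD2l; apply: ler_wpM2l; first by case: (_ \in _).
rewrite /Tb -/c.
have eKp : 0 <= 1 + eta * K1 by have := mulr_ge0 (ltW e0) (ltW K10); lra.
apply: lerD.
  apply: ler_wpM2l; first by clearbody c; (repeat apply: mulr_ge0); lra.
  lra.
apply: ler_wpM2l; first by clearbody c; apply: mulr_ge0; [exact: sqr_ge0 | rewrite !mulr_ge0 ?sqr_ge0 //; lra].
lra.
Qed.
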